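(* For every set of formulas $\Gamma$ and formula $\phi$: if $\Gamma\models_{\mathbf{CK}}\phi$ then $\Gamma\vdash_{\mathbf{CK}}\phi$.
   Context: Formulas: built from propositional variables and the constant $\bot$ using $\lnot$, the binary connectives $\supset,\land,\lor$, and two binary conditional operators $[\phi]\psi$ and $\langle\phi\rangle\psi$ (treated as primitive by tableau rules). $\top$ abbreviates $\lnot\bot$. Segerberg model: $M=\langle U,P,R,V\rangle$ with $U\neq\emptyset$, $P\subseteq\wp(U)$, $R:P\to\wp(U\times U)$, $V:\mathrm{Var}\to P$, such that $\emptyset,U\in P$; $P$ is closed under complement, binary intersection and union; and for $S,T\in P$, $\{x\in U\mid R_S(x)\subseteq T\}\in P$, where $R_S=R(S)$ and $R_S(x)=\{y\mid (x,y)\in R_S\}$. Truth: $M,x\not\models\bot$; $M,x\models p$ iff $x\in V(p)$; Boolean connectives as usual; $M,x\models[\phi]\psi$ iff $M,y\models\psi$ for all $y\in R_\phi(x)$; $M,x\models\langle\phi\rangle\psi$ iff $M,y\models\psi$ for some $y\in R_\phi(x)$; here $\|\phi\|=\{x\mid M,x\models\phi\}$ (which lies in $P$) and $R_\phi=R_{\|\phi\|}$. $\Gamma\models_{\mathbf{CK}}\phi$ iff for every Segerberg model $M$ and $x\in U$ with $M,x\models\psi$ for all $\psi\in\Gamma$, $M,x\models\phi$. Tableaux: indices are positive integers. Prefixed formulas are expressions $i:\phi$ and $i\,r_\phi\,j$. For a set $\Gamma$ of formulas and a formula $\phi$, a tableau for $(\Gamma,\phi)$ is a finite downward-branching tree labelled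 by prefixed formulas, each of which is either an assumption ($1:\psi$ with $\psi\in\Gamma$, or $1:\lnot\phi$) or obtained by applying a branch extension rule to prefixed formulas on its branch; applying a non-branching rule appends its conclusions to the branch, applying a branching rule splits the branch into one child branch per alternative, each alternative appending its listed conclusions. A branch is closed if it contains $i:\chi$ and $i:\lnot\chi$ for some $i,\chi$, or contains $i:\bot$; a tableau is closed if all branches are closed. $\Gamma\vdash_X\phi$ means there is a closed $X$-tableau for $(\Gamma,\phi)$. Basic ($\mathbf{Ck}$) rules: from $i:\phi\land\psi$ add $i:\phi,i:\psi$; from $i:\lnot(\phi\land\psi)$ branch into $i:\lnot\phi\mid i:\lnot\psi$; from $i:\phi\lor\psi$ branch into $i:\phi\mid i:\psi$; from $i:\lnot(\phi\lor\psi)$ add $i:\lnot\phi,i:\lnot\psi$; from $i:\phi\supset\psi$ branch into $i:\lnot\phi\mid i:\psi$; from $i:\lnot(\phi\supset\psi)$ add $i:\phi,i:\lnot\psi$; from $i:\lnot\lnot\phi$ add $i:\phi$; ($\Box$) from $i:[\phi]\psi$ and $i\,r_\phi\,j$ add $j:\psi$; ($\lnot\Box$) from $i:\lnot[\phi]\psi$ add $i\,r_\phi\,j$ and $j:\lnot\psi$ with $j$ new to the branch; ($\Diamond$) from $i:\langle\phi\rangle\psi$ add $i\,r_\phi\,j$ and $j:\psi$ with $j$ new; ($\lnot\Diamond$) from $i:\lnot\langle\phi\rangle\psi$ and $i\,r_\phi\,j$ add $j:\lnot\psi$. (cut) for any index $i$ already on the branch and any formula $\phi$, branch into $i:\phi\mid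 i:\lnot\phi$. (ea) from $i\,r_\phi\,j$ and any formula $\psi$, branch into ($k:\lnot\phi$, $k:\psi$) $\mid$ ($k:\phi$, $k:\lnot\psi$) $\mid$ $i\,r_\psi\,j$, with $k$ new to the branch. $\mathbf{CK}$-tableaux use the basic rules, cut and ea. *)

(* Defs.v *)
From Stdlib Require Import List.
Import ListNotations.

Inductive form : Type :=
| Var : nat -> form
| Bot : form
| Neg : form -> form
| Imp : form -> form -> form
| And : form -> form -> form
| Or  : form -> form -> form
| Box : form -> form -> form
| Dia : form -> form -> form.

Definition Top : form := Neg Bot.

(** Sets of worlds are predicates [U -> Prop]; since sets are extensional,
    we require [P] and [R] to respect extensional equality of predicates.
    [R] is given on all predicates, but only its values on members of [P]
    matter. *)
Record model : Type := {
  U : Type;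
  u0 : U;
  P : (U -> Prop) -> Prop;
  R : (U -> Prop) -> U -> U -> Prop;
  V : nat -> U -> Prop;
  P_ext : forall S T : U -> Prop, (forall x, S x <-> T x) -> P S -> P T;
  R_ext : forall S T : U -> Prop, P S -> (forall x, S x <-> T x) ->
            forall x y, R S x y <-> R T x y;
  P_empty : P (fun _ => False);
  P_full  : P (fun _ => True);
  P_compl : forall S, P S -> P (fun x => ~ S x);
  P_inter : forall S T, P S -> P T -> P (fun x => S x /\ T x);
  P_union : forall S T, P S -> P T -> P (fun x => S x \/ T x);
  P_box   : forall S T, P S -> P T -> P (fun x => forall y, R S x y -> T y);
  V_P     : forall p, P (V p)
}.

Fixpoint sat (M : model) (x : U M) (f : form) : Prop :=
  match f with
  | Var p => V M p x
  | Bot => False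
  | Neg a => ~ sat M x a
  | Imp a b => sat M x a -> sat M x b
  | And a b => sat M x a /\ sat M x b
  | Or a b => sat M x a \/ sat M x b
  | Box a b => forall y, R M (fun z => sat M z a) x y -> sat M y b
  | Dia a b => exists y, R M (fun z => sat M z a) x y /\ sat M y b
  end.

Definition entails (Gamma : form -> Prop) (phi : form) : Prop :=
  forall (M : model) (x : U M),
    (forall psi, Gamma psi -> sat M x psi) -> sat M x phi.

(** Prefixed formulas: [PF i phi] is  i : phi ;  [PR i phi j] is  i r_phi j.
    Indices are positive naturals. *)
Inductive pform : Type :=
| PF : nat -> form -> pform
| PR : nat -> form -> nat -> pform.

Definition branch := list pform.

Definition occurs (i : nat) (B : branch) : Prop :=
  exists a, (In (PF i a) B \/ exists j, In (PR i a j) B \/ In (PR j a i) B).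

Definition fresh (j : nat) (B : branch) : Prop := 0 < j /\ ~ occurs j B.

Definition closed_branch (B : branch) : Prop :=
  (exists i c, In (PF i c) B /\ In (PF i (Neg c)) B) \/
  (exists i, In (PF i Bot) B).

Inductive rule_app (B : branch) : list (list pform) -> Prop :=
| r_and i a b : In (PF i (And a b)) B ->
    rule_app B [[PF i a; PF i b]]
| r_nand i a b : In (PF i (Neg (And a b))) B ->
    rule_app B [[PF i (Neg a)]; [PF i (Neg b)]]
| r_or i a b : In (PF i (Or a b)) B ->
    rule_app B [[PF i a]; [PF i b]]
| r_nor i a b : In (PF i (Neg (Or a b))) B ->
    rule_app B [[PF i (Neg a); PF i (Neg b)]]
| r_imp i a b : In (PF i (Imp a b)) B ->
    rule_app B [[PF i (Neg a)]; [PF i b]]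
| r_nimp i a b : In (PF i (Neg (Imp a b))) B ->
    rule_app B [[PF i a; PF i (Neg b)]]
| r_nneg i a : In (PF i (Neg (Neg a))) B ->
    rule_app B [[PF i a]]
| r_box i j a b : In (PF i (Box a b)) B -> In (PR i a j) B ->
    rule_app B [[PF j b]]
| r_nbox i j a b : In (PF i (Neg (Box a b))) B -> fresh j B ->
    rule_app B [[PR i a j; PF j (Neg b)]]
| r_dia i j a b : In (PF i (Dia a b)) B -> fresh j B ->
    rule_app B [[PR i a j; PF j b]]
| r_ndia i j a b : In (PF i (Neg (Dia a b))) B -> In (PR i a j) B ->
    rule_app B [[PF j (Neg b)]]
| r_cut i a : occurs i B ->
    rule_app B [[PF i a]; [PF i (Neg a)]]
| r_ea i j k a b : In (PR i a j) B -> fresh k B ->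
    rule_app B [[PF k (Neg a); PF k b]; [PF k a; PF k (Neg b)]; [PR i b j]].

Definition assumption (Gamma : form -> Prop) (phi : form) (p : pform) : Prop :=
  (exists psi, Gamma psi /\ p = PF 1 psi) \/ p = PF 1 (Neg phi).

(** [closable Gamma phi B]: the branch [B] (listed most recent first) can be
    extended to a finite tree all of whose branches are closed, where each
    new node is an assumption or obtained by a rule. *)
Inductive closable (Gamma : form -> Prop) (phi : form) : branch -> Prop :=
| cl_closed B : closed_branch B -> closable Gamma phi B
| cl_assume B p : assumption Gamma phi p ->
    closable Gamma phi (p :: B) -> closable Gamma phi B
| cl_rule B alts : rule_app B alts ->
    (forall A, In A alts -> closable Gamma phi (rev A ++ B)) ->
    closable Gamma phi B.

Definition derivable (Gamma : form -> Prop) (phi : form) : Prop :=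
  closable Gamma phi [].

(* Main.v *)
Require Import Defs.
From Stdlib Require Import List Lia Arith Classical ClassicalEpsilon Cantor.
Import ListNotations.

Inductive tc : branch -> Prop :=
| tc_closed B : closed_branch B -> tc B
| tc_rule B alts : rule_app B alts ->
    (forall A, In A alts -> tc (rev A ++ B)) -> tc B.

Definition ren (s : nat -> nat) (q : pform) : pform :=
  match q with PF i a => PF (s i) a | PR i a j => PR (s i) a (s j) end.

Definition upd (s : nat -> nat) (j j' : nat) : nat -> nat :=
  fun n => if Nat.eqb n j then j' else s n.

Lemma upd_eq s j j' : upd s j j' j = j'.
Proof. unfold upd. rewrite Nat.eqb_refl. reflexivity. Qed.

Lemma upd_neq s j j' n : n <> j -> upd s j j' n = s n.
Proof. intro H. unfold upd. destruct (Nat.eqb_spec n j); congruence. Qed.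

Lemma agree s j j' B q : ~ occurs j B -> In q B -> ren (upd s j j') q = ren s q.
Proof.
  intros Hn Hq. destruct q as [i a | i a k]; simpl.
  - rewrite upd_neq; auto. intro; subst. apply Hn. exists a. left; auto.
  - rewrite (upd_neq s j j' i), (upd_neq s j j' k); auto.
    + intro; subst. apply Hn. exists a. right. exists i. right; auto.
    + intro; subst. apply Hn. exists a. right. exists k. left; auto.
Qed.

Fixpoint maxi (B : branch) : nat :=
  match B with
  | [] => 0
  | PF i _ :: B' => max i (maxi B')
  | PR i _ j :: B' => max i (max j (maxi B'))
  end.

Lemma maxi_ge B q : In q B -> match q with PF i _ => i <= maxi B | PR i _ j => i <= maxi B /\ j <= maxi B end.
Proof.
  induction B as [|q' B IH]; simpl; [tauto|]. intros [E|H].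
  - subst q'. destruct q; lia.
  - specialize (IH H). destruct q, q'; lia.
Qed.

Lemma ex_fresh B : exists j, fresh j B.
Proof.
  exists (S (maxi B)). split; [lia|].
  intros [a [H|[j [H|H]]]]; apply maxi_ge in H; simpl in H; lia.
Qed.

Lemma fresh_occ i j B : fresh j B -> occurs i B -> i <> j.
Proof. intros [_ H] H2 ->. tauto. Qed.

Lemma step s B B' alts : rule_app B' (map (map (ren s)) alts) ->
  (forall A, In A alts -> forall s0 B0, (forall q, In q (rev A ++ B) -> In (ren s0 q) B0) -> tc B0) ->
  (forall q, In q B -> In (ren s q) B') -> tc B'.
Proof.
  intros Hr IH HB. apply (tc_rule _ _ Hr). intros A' HA'.
  apply in_map_iff in HA'. destruct HA' as [A [<- HA]].
  apply (IH A HA s). intros q Hq. apply in_app_iff in Hq. apply in_app_iff.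
  destruct Hq as [Hq|Hq]; [left|right; auto].
  rewrite <- map_rev. apply in_map. auto.
Qed.

Lemma tc_map B : tc B -> forall s B', (forall q, In q B -> In (ren s q) B') -> tc B'.
Proof.
  induction 1 as [B Hc | B alts Hr Hch IH]; intros s B' HB.
  - apply tc_closed. destruct Hc as [[i [c [H1 H2]]]|[i H]].
    + left. exists (s i), c. split; [apply (HB _ H1)|apply (HB _ H2)].
    + right. exists (s i). apply (HB _ H).
  - destruct Hr.
    + apply (step s B B' [[PF i a; PF i b]]); auto. simpl. apply r_and. apply (HB _ H).
    + apply (step s B B' [[PF i (Neg a)]; [PF i (Neg b)]]); auto. simpl. apply r_nand. apply (HB _ H).
    + apply (step s B B' [[PF i a]; [PF i b]]); auto. simpl. apply r_or. apply (HB _ H).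
    + apply (step s B B' [[PF i (Neg a); PF i (Neg b)]]); auto. simpl. apply r_nor. apply (HB _ H).
    + apply (step s B B' [[PF i (Neg a)]; [PF i b]]); auto. simpl. apply r_imp. apply (HB _ H).
    + apply (step s B B' [[PF i a; PF i (Neg b)]]); auto. simpl. apply r_nimp. apply (HB _ H).
    + apply (step s B B' [[PF i a]]); auto. simpl. apply r_nneg. apply (HB _ H).
    + apply (step s B B' [[PF j b]]); auto. simpl. eapply r_box; [apply (HB _ H)|apply (HB _ H0)].
    + destruct (ex_fresh B') as [j' Hj'].
      assert (Hij : i <> j) by (eapply fresh_occ; eauto; exists (Neg (Box a b)); left; auto).
      apply (step (upd s j j') B B' [[PR i a j; PF j (Neg b)]]); auto.
      * simpl. rewrite upd_eq, upd_neq by auto. apply r_nbox; auto. apply (HB _ H).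
      * intros q Hq. rewrite (agree s j j' B q); auto. apply H0.
    + destruct (ex_fresh B') as [j' Hj'].
      assert (Hij : i <> j) by (eapply fresh_occ; eauto; exists (Dia a b); left; auto).
      apply (step (upd s j j') B B' [[PR i a j; PF j b]]); auto.
      * simpl. rewrite upd_eq, upd_neq by auto. apply r_dia; auto. apply (HB _ H).
      * intros q Hq. rewrite (agree s j j' B q); auto. apply H0.
    + apply (step s B B' [[PF j (Neg b)]]); auto. simpl. eapply r_ndia; [apply (HB _ H)|apply (HB _ H0)].
    + apply (step s B B' [[PF i a]; [PF i (Neg a)]]); auto. simpl. apply r_cut.
      destruct H as [c [H|[k [H|H]]]]; exists c; [left|right; exists (s k); left|right; exists (s k); right];
        apply (HB _ H).
    + destruct (ex_fresh B') as [k' Hk'].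
      assert (Hik : i <> k) by (eapply fresh_occ; eauto; exists a; right; exists j; left; auto).
      assert (Hjk : j <> k) by (eapply fresh_occ; eauto; exists a; right; exists i; right; auto).
      apply (step (upd s k k') B B' [[PF k (Neg a); PF k b]; [PF k a; PF k (Neg b)]; [PR i b j]]); auto.
      * simpl. rewrite upd_eq, !upd_neq by auto. apply r_ea; auto. apply (HB _ H).
      * intros q Hq. rewrite (agree s k k' B q); auto. apply H0.
Qed.

Lemma tc_weak B B' : tc B -> (forall q, In q B -> In q B') -> tc B'.
Proof.
  intros H HB. apply (tc_map B H (fun n => n)). intros q Hq. destruct q; simpl; apply HB; auto.
Qed.

Lemma tc1 B A : rule_app B [A] -> tc (rev A ++ B) -> tc B.
Proof. intros H1 H2. apply (tc_rule _ _ H1). intros A' [<-|[]]; auto. Qed.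

Lemma tc2 B A1 A2 : rule_app B [A1; A2] -> tc (rev A1 ++ B) -> tc (rev A2 ++ B) -> tc B.
Proof. intros H1 H2 H3. apply (tc_rule _ _ H1). intros A' [<-|[<-|[]]]; auto. Qed.

Lemma tc3 B A1 A2 A3 : rule_app B [A1; A2; A3] -> tc (rev A1 ++ B) -> tc (rev A2 ++ B) -> tc (rev A3 ++ B) -> tc B.
Proof. intros H1 H2 H3 H4. apply (tc_rule _ _ H1). intros A' [<-|[<-|[<-|[]]]]; auto. Qed.

Ltac clos i c := apply tc_closed; left; exists i, c; split; simpl; intuition auto.

Lemma add_top i B : occurs i B -> tc (PF i Top :: B) -> tc B.
Proof.
  intros Ho H. apply (tc2 B [PF i Top] [PF i (Neg Top)]). apply r_cut; auto.
  - exact H.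
  - simpl. apply (tc1 _ [PF i Bot]). apply r_nneg. simpl; auto.
    apply tc_closed. right. exists i. simpl; auto.
Qed.

Definition inc (L : list form) : Prop := tc (map (PF 1) (Top :: L)).

Lemma inc_weak L L' : inc L -> (forall a, In a L -> In a L') -> inc L'.
Proof.
  unfold inc. intros H HL. apply (tc_weak _ _ H). intros q Hq.
  simpl in *. destruct Hq as [<-|Hq]; [left; auto|right].
  apply in_map_iff in Hq. destruct Hq as [a [<- Ha]]. apply in_map. auto.
Qed.

Lemma inc_cut a L : inc (a :: L) -> inc (Neg a :: L) -> inc L.
Proof.
  unfold inc. intros H1 H2. simpl.
  apply (tc2 _ [PF 1 a] [PF 1 (Neg a)]). apply r_cut. exists Top. left. simpl; auto.
  - apply (tc_weak _ _ H1). simpl. intros q; intuition auto.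
  - apply (tc_weak _ _ H2). simpl. intros q; intuition auto.
Qed.

Definition consis (X : form -> Prop) : Prop :=
  ~ exists L, (forall l, In l L -> X l) /\ inc L.

Definition MCS (x : form -> Prop) : Prop := consis x /\ forall a, x a \/ x (Neg a).

Lemma cons_sub X Y : consis X -> (forall b, Y b -> X b) -> consis Y.
Proof. intros H HY [L [HL Hi]]. apply H. exists L. split; auto. Qed.

Definition add (X : form -> Prop) a : form -> Prop := fun b => X b \/ b = a.

Lemma extract X a L : (forall l, In l L -> add X a l) ->
  exists L', (forall l, In l L' -> X l) /\ (forall l, In l L -> In l (a :: L')).
Proof.
  induction L as [|b L IH]; intros H.
  - exists []. simpl. tauto.
  - destruct IH as [L' [H1 H2]]. intros l Hl; apply H; simpl; auto.
    destruct (H b (or_introl eq_refl)) as [Hb|Hb].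
    + exists (b :: L'). split.
      * intros l [<-|Hl]; auto.
      * intros l [<-|Hl]; simpl; auto. apply H2 in Hl. simpl in Hl. tauto.
    + exists L'. split; auto. intros l [<-|Hl]; simpl; auto. apply H2 in Hl. auto.
Qed.

Lemma cons_split X a : consis X -> consis (add X a) \/ consis (add X (Neg a)).
Proof.
  intros H. apply NNPP. intros Hn. apply not_or_and in Hn. destruct Hn as [H1 H2].
  unfold consis in H1, H2. apply NNPP in H1. apply NNPP in H2.
  destruct H1 as [L1 [HL1 I1]]. destruct H2 as [L2 [HL2 I2]].
  destruct (extract _ _ _ HL1) as [L1' [A1 B1]].
  destruct (extract _ _ _ HL2) as [L2' [A2 B2]].
  apply H. exists (L1' ++ L2'). split.
  - intros l Hl. apply in_app_iff in Hl. destruct Hl; auto.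
  - apply (inc_cut a).
    + apply (inc_weak _ _ I1). intros l Hl. apply B1 in Hl. simpl in *. rewrite in_app_iff. tauto.
    + apply (inc_weak _ _ I2). intros l Hl. apply B2 in Hl. simpl in *. rewrite in_app_iff. tauto.
Qed.

Fixpoint enc (a : form) : nat :=
  match a with
  | Var p => to_nat (0, p)
  | Bot => to_nat (1, 0)
  | Neg a => to_nat (2, enc a)
  | Imp a b => to_nat (3, to_nat (enc a, enc b))
  | And a b => to_nat (4, to_nat (enc a, enc b))
  | Or a b => to_nat (5, to_nat (enc a, enc b))
  | Box a b => to_nat (6, to_nat (enc a, enc b))
  | Dia a b => to_nat (7, to_nat (enc a, enc b))
  end.

Lemma to_inj p q : to_nat p = to_nat q -> p = q.
Proof. intros H. rewrite <- (cancel_of_to p), <- (cancel_of_to q), H. reflexivity. Qed.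

Lemma enc_inj a b : enc a = enc b -> a = b.
Proof.
  revert b. induction a; destruct b; cbn [enc]; intros H; apply to_inj in H; try congruence;
  apply pair_equal_spec in H; destruct H as [_ H1];
  try (apply to_inj in H1; apply pair_equal_spec in H1; destruct H1);
  f_equal; auto.
Qed.

Definition enum (n : nat) : form := epsilon (inhabits Bot) (fun a => enc a = n).

Lemma enum_surj a : exists n, enum n = a.
Proof.
  exists (enc a). apply enc_inj. unfold enum. apply (epsilon_spec (inhabits Bot) (fun b => enc b = enc a)).
  exists a; auto.
Qed.

Fixpoint chain (X : form -> Prop) (n : nat) : form -> Prop :=
  match n with
  | 0 => X
  | S n => fun b => chain X n b \/ (b = enum n /\ consis (add (chain X n) (enum n)))
                    \/ (b = Neg (enum n) /\ ~ consis (add (chain X n) (enum n)))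
  end.

Lemma chain_cons X n : consis X -> consis (chain X n).
Proof.
  intros H. induction n as [|n IH]; simpl; auto.
  destruct (classic (consis (add (chain X n) (enum n)))) as [Hc|Hc].
  - apply (cons_sub _ _ Hc). intros b [Hb|[[-> _]|[_ Hf]]]; unfold add; tauto.
  - destruct (cons_split _ (enum n) IH) as [H1|H1]; [tauto|].
    apply (cons_sub _ _ H1). intros b [Hb|[[_ Hf]|[-> _]]]; unfold add; tauto.
Qed.

Lemma chain_mono X n m b : n <= m -> chain X n b -> chain X m b.
Proof. induction 1; simpl; auto. Qed.

Lemma lindenbaum X : consis X -> exists x, MCS x /\ forall a, X a -> x a.
Proof.
  intros H. exists (fun b => exists n, chain X n b). split; [split|].
  - intros [L [HL Hi]].
    assert (exists N, forall l, In l L -> chain X N l) as [N HN].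
    { clear Hi. induction L as [|b L IHL].
      - exists 0. simpl; tauto.
      - destruct IHL as [N HN]. intros l Hl; apply HL; simpl; auto.
        destruct (HL b (or_introl eq_refl)) as [m Hm].
        exists (max N m). intros l [<-|Hl].
        + apply (chain_mono X m); auto; lia.
        + apply (chain_mono X N); auto; lia. }
    apply (chain_cons X N H). exists L. auto.
  - intros a. destruct (enum_surj a) as [n <-].
    destruct (classic (consis (add (chain X n) (enum n)))) as [Hc|Hc].
    + left. exists (S n). simpl. tauto.
    + right. exists (S n). simpl. tauto.
  - intros a Ha. exists 0. auto.
Qed.


Lemma not_occurs j B : (forall q, In q B -> match q with PF i _ => i <> j | PR i _ k => i <> j /\ k <> j end) -> ~ occurs j B.
Proof.
  intros H [a [Ha|[k [Ha|Ha]]]]; apply H in Ha; simpl in Ha; tauto.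
Qed.

Ltac fresh_tac := split; [lia|]; apply not_occurs; intros q Hq; simpl in Hq;
  repeat (destruct Hq as [<-|Hq]; [simpl; lia|]); try contradiction;
  apply in_map_iff in Hq; destruct Hq as [? [<- _]]; simpl; lia.

Ltac inl := simpl; repeat (first [left; reflexivity | right]).

Lemma mcs_noinc x L : MCS x -> (forall l, In l L -> x l) -> ~ inc L.
Proof. intros [H _] HL Hi. apply H. exists L. auto. Qed.

Lemma mcs_pos x L a : MCS x -> (forall l, In l L -> x l) -> inc (Neg a :: L) -> x a.
Proof.
  intros Hx HL Hi. destruct (proj2 Hx a) as [H|H]; auto. exfalso.
  apply (mcs_noinc x _ Hx) in Hi; auto. intros l [<-|Hl]; auto.
Qed.

Lemma mcs_negI x a : MCS x -> (x (Neg a) <-> ~ x a).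
Proof.
  intros Hx. split.
  - intros H1 H2. apply (mcs_noinc x [a; Neg a] Hx).
    + intros l [<-|[<-|[]]]; auto.
    + unfold inc. simpl. clos 1 a.
  - intros H. destruct (proj2 Hx a); tauto.
Qed.

Lemma mcs_bot x : MCS x -> ~ x Bot.
Proof.
  intros Hx H. apply (mcs_noinc x [Bot] Hx).
  - intros l [<-|[]]; auto.
  - unfold inc. simpl. apply tc_closed. right. exists 1. simpl; auto.
Qed.

Lemma mcs_imp x a b : MCS x -> (x (Imp a b) <-> (x a -> x b)).
Proof.
  intros Hx. split.
  - intros H Ha. apply (mcs_pos x [Imp a b; a]); auto.
    + intros l [<-|[<-|[]]]; auto.
    + unfold inc; simpl. apply (tc2 _ [PF 1 (Neg a)] [PF 1 b]). apply r_imp. inl.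
      * simpl. clos 1 a.
      * simpl. clos 1 b.
  - intros H. destruct (classic (x a)) as [Ha|Ha].
    + apply (mcs_pos x [b]); auto.
      * intros l [<-|[]]; auto.
      * unfold inc; simpl. apply (tc1 _ [PF 1 a; PF 1 (Neg b)]). apply r_nimp. inl. simpl. clos 1 b.
    + apply (mcs_pos x [Neg a]); auto.
      * intros l [<-|[]]. apply (mcs_negI x a Hx); auto.
      * unfold inc; simpl. apply (tc1 _ [PF 1 a; PF 1 (Neg b)]). apply r_nimp. inl. simpl. clos 1 a.
Qed.

Lemma mcs_and x a b : MCS x -> (x (And a b) <-> (x a /\ x b)).
Proof.
  intros Hx. split.
  - intros H. split.
    + apply (mcs_pos x [And a b]); auto. intros l [<-|[]]; auto.
      unfold inc; simpl. apply (tc1 _ [PF 1 a; PF 1 b]). apply r_and. inl. simpl. clos 1 a.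
    + apply (mcs_pos x [And a b]); auto. intros l [<-|[]]; auto.
      unfold inc; simpl. apply (tc1 _ [PF 1 a; PF 1 b]). apply r_and. inl. simpl. clos 1 b.
  - intros [Ha Hb]. apply (mcs_pos x [a; b]); auto. intros l [<-|[<-|[]]]; auto.
    unfold inc; simpl. apply (tc2 _ [PF 1 (Neg a)] [PF 1 (Neg b)]). apply r_nand. inl.
    + simpl. clos 1 a.
    + simpl. clos 1 b.
Qed.

Lemma mcs_or x a b : MCS x -> (x (Or a b) <-> (x a \/ x b)).
Proof.
  intros Hx. split.
  - intros H. apply NNPP. intros Hn. apply not_or_and in Hn. destruct Hn as [Ha Hb].
    apply (mcs_noinc x [Or a b; Neg a; Neg b] Hx).
    + intros l [<-|[<-|[<-|[]]]]; auto; apply (mcs_negI x _ Hx); auto.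
    + unfold inc; simpl. apply (tc2 _ [PF 1 a] [PF 1 b]). apply r_or. inl.
      * simpl. clos 1 a.
      * simpl. clos 1 b.
  - intros [Ha|Hb].
    + apply (mcs_pos x [a]); auto. intros l [<-|[]]; auto.
      unfold inc; simpl. apply (tc1 _ [PF 1 (Neg a); PF 1 (Neg b)]). apply r_nor. inl. simpl. clos 1 a.
    + apply (mcs_pos x [b]); auto. intros l [<-|[]]; auto.
      unfold inc; simpl. apply (tc1 _ [PF 1 (Neg a); PF 1 (Neg b)]). apply r_nor. inl. simpl. clos 1 b.
Qed.

Definition U0 : Type := { x : form -> Prop | MCS x }.

Lemma inc_complete L : ~ inc L -> exists z : U0, forall l, In l L -> proj1_sig z l.
Proof.
  intros H. assert (Hc : consis (fun a => In a L)).
  { intros [L' [HL' Hi]]. apply H. apply (inc_weak _ _ Hi). auto. }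
  destruct (lindenbaum _ Hc) as [z [Hz Hs]]. exists (exist _ z Hz). simpl. auto.
Qed.

Lemma equiv_box f f' c (x : U0) :
  (forall z : U0, proj1_sig z f <-> proj1_sig z f') ->
  proj1_sig x (Box f' c) -> proj1_sig x (Box f c).
Proof.
  intros Heq Hb.
  assert (E1 : inc [Neg f; f']).
  { apply NNPP. intros Hn. destruct (inc_complete _ Hn) as [z Hz].
    assert (H1 := Hz (Neg f) (or_introl eq_refl)).
    assert (H2 := Hz f' (or_intror (or_introl eq_refl))).
    apply (mcs_negI _ f (proj2_sig z)) in H1. apply H1, Heq, H2. }
  assert (E2 : inc [f; Neg f']).
  { apply NNPP. intros Hn. destruct (inc_complete _ Hn) as [z Hz].
    assert (H1 := Hz f (or_introl eq_refl)).
    assert (H2 := Hz (Neg f') (or_intror (or_introl eq_refl))).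
    apply (mcs_negI _ f' (proj2_sig z)) in H2. apply H2, Heq, H1. }
  apply (mcs_pos _ [Box f' c] _ (proj2_sig x)). intros l [<-|[]]; auto.
  unfold inc; simpl.
  apply (tc1 _ [PR 1 f 2; PF 2 (Neg c)]). apply r_nbox. inl. fresh_tac.
  simpl.
  apply (tc3 _ [PF 3 (Neg f); PF 3 f'] [PF 3 f; PF 3 (Neg f')] [PR 1 f' 2]).
  apply r_ea. inl. fresh_tac.
  - simpl. apply (add_top 3). exists f'. left. inl.
    apply (tc_map _ E1 (fun _ => 3)). intros q Hq. simpl in Hq.
    destruct Hq as [<-|[<-|[<-|[]]]]; inl.
  - simpl. apply (add_top 3). exists f. left. inl.
    apply (tc_map _ E2 (fun _ => 3)). intros q Hq. simpl in Hq.
    destruct Hq as [<-|[<-|[<-|[]]]]; inl.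
  - simpl. apply (tc1 _ [PF 2 c]). apply (r_box _ 1 2 f' c); inl. simpl. clos 2 c.
Qed.

Lemma box_all i j a Ls : forall B, In (PR i a j) B -> (forall c, In c Ls -> In (PF i (Box a c)) B) ->
  tc (map (PF j) Ls ++ B) -> tc B.
Proof.
  induction Ls as [|c Ls IH]; intros B HR HL H; simpl in *; auto.
  apply (tc1 _ [PF j c]). apply (r_box _ i j a c); auto. simpl.
  apply IH; simpl; auto.
  apply (tc_weak _ _ H). intros q Hq. simpl in Hq. rewrite in_app_iff in *. simpl. tauto.
Qed.

Definition cP (S : U0 -> Prop) : Prop := exists f, forall z : U0, S z <-> proj1_sig z f.
Definition cR (S : U0 -> Prop) (x y : U0) : Prop :=
  forall f', (forall z : U0, S z <-> proj1_sig z f') -> forall c, proj1_sig x (Box f' c) -> proj1_sig y c.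
Definition cV (p : nat) (z : U0) : Prop := proj1_sig z (Var p).

Lemma cR_ext S T x y : (forall z, S z <-> T z) -> (cR S x y <-> cR T x y).
Proof.
  intros H. unfold cR. split; intros H1 f' H2; apply H1; intros z; rewrite <- H2; auto.
  rewrite H; tauto.
Qed.

Lemma Yextract (X : form -> Prop) a L : (forall l, In l L -> l = a \/ X l) ->
  exists L', (forall l, In l L' -> X l) /\ (forall l, In l L -> In l (a :: L')).
Proof.
  intros H. apply extract. intros l Hl. unfold add. destruct (H l Hl); tauto.
Qed.

Lemma box_lemma (x : U0) f p : (forall y : U0, cR (fun z => proj1_sig z f) x y -> proj1_sig y p) <-> proj1_sig x (Box f p).
Proof.
  split.
  - intros H. apply NNPP. intros Hn.
    assert (Hx := proj2_sig x).
    assert (Hneg : proj1_sig x (Neg (Box f p))) by (apply (mcs_negI _ _ Hx); auto).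
    assert (HY : consis (fun c => c = Neg p \/ proj1_sig x (Box f c))).
    { intros [L [HL Hi]]. destruct (Yextract _ _ _ HL) as [L' [A1 A2]].
      assert (I := inc_weak _ _ Hi A2).
      apply (mcs_noinc _ (Neg (Box f p) :: map (Box f) L') Hx).
      - intros l [<-|Hl]; auto. apply in_map_iff in Hl. destruct Hl as [c [<- Hc]]. auto.
      - unfold inc; simpl.
        apply (tc1 _ [PR 1 f 2; PF 2 (Neg p)]). apply r_nbox. inl. fresh_tac. simpl.
        apply (box_all 1 2 f L'). inl.
        { intros c Hc. do 4 right. apply (in_map (PF 1)). apply in_map. auto. }
        apply (add_top 2). exists (Neg p). left. apply in_or_app. right. left. auto.
        apply (tc_map _ I (fun _ => 2)). intros q Hq. simpl in Hq.
        destruct Hq as [<-|[<-|Hq]].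
        + left; auto.
        + right. apply in_or_app. right. left. auto.
        + apply in_map_iff in Hq. destruct Hq as [l [<- Hl]]. simpl. right. apply in_or_app. left.
          apply (in_map (PF 2)). auto. }
    destruct (lindenbaum _ HY) as [y [Hy HYy]].
    assert (Hp := H (exist _ y Hy)). simpl in Hp.
    assert (Hyn : y (Neg p)) by (apply HYy; auto).
    apply (mcs_negI _ _ Hy) in Hyn. apply Hyn, Hp.
    intros f' Heq c Hc. simpl. apply HYy. right. apply (equiv_box f f' c x Heq Hc).
  - intros H y Hr. apply (Hr f (fun z => iff_refl _) p H).
Qed.

Lemma ndia_box (x : U0) f p : proj1_sig x (Neg (Dia f p)) -> proj1_sig x (Box f (Neg p)).
Proof.
  intros H. apply (mcs_pos _ [Neg (Dia f p)] _ (proj2_sig x)). intros l [<-|[]]; auto.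
  unfold inc; simpl.
  apply (tc1 _ [PR 1 f 2; PF 2 (Neg (Neg p))]). apply r_nbox. inl. fresh_tac. simpl.
  apply (tc1 _ [PF 2 (Neg p)]). apply (r_ndia _ 1 2 f p); inl. simpl.
  clos 2 (Neg p).
Qed.

Lemma dia_lemma (x : U0) f p : (exists y : U0, cR (fun z => proj1_sig z f) x y /\ proj1_sig y p) <-> proj1_sig x (Dia f p).
Proof.
  split.
  - intros [y [Hr Hy]]. apply NNPP. intros Hn.
    assert (Hneg : proj1_sig x (Neg (Dia f p))) by (apply (mcs_negI _ _ (proj2_sig x)); auto).
    apply ndia_box in Hneg.
    assert (H2 := Hr f (fun z => iff_refl _) (Neg p) Hneg).
    apply (mcs_negI _ _ (proj2_sig y)) in H2. auto.
  - intros H.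
    assert (Hx := proj2_sig x).
    assert (HY : consis (fun c => c = p \/ proj1_sig x (Box f c))).
    { intros [L [HL Hi]]. destruct (Yextract _ _ _ HL) as [L' [A1 A2]].
      assert (I := inc_weak _ _ Hi A2).
      apply (mcs_noinc _ (Dia f p :: map (Box f) L') Hx).
      - intros l [<-|Hl]; auto. apply in_map_iff in Hl. destruct Hl as [c [<- Hc]]. auto.
      - unfold inc; simpl.
        apply (tc1 _ [PR 1 f 2; PF 2 p]). apply r_dia. inl. fresh_tac. simpl.
        apply (box_all 1 2 f L'). inl.
        { intros c Hc. do 4 right. apply (in_map (PF 1)). apply in_map. auto. }
        apply (add_top 2). exists p. left. apply in_or_app. right. left. auto.
        apply (tc_map _ I (fun _ => 2)). intros q Hq. simpl in Hq.
        destruct Hq as [<-|[<-|Hq]].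
        + left; auto.
        + right. apply in_or_app. right. left. auto.
        + apply in_map_iff in Hq. destruct Hq as [l [<- Hl]]. simpl. right. apply in_or_app. left.
          apply (in_map (PF 2)). auto. }
    destruct (lindenbaum _ HY) as [y [Hy HYy]].
    exists (exist _ y Hy). simpl. split; [|apply HYy; auto].
    intros f' Heq c Hc. simpl. apply HYy. right. apply (equiv_box f f' c x Heq Hc).
Qed.

Lemma cP_ext : forall S T : U0 -> Prop, (forall x, S x <-> T x) -> cP S -> cP T.
Proof. intros S T H [f Hf]. exists f. intros z. rewrite <- H. auto. Qed.

Lemma cR_ext2 : forall S T : U0 -> Prop, cP S -> (forall x, S x <-> T x) ->
  forall x y, cR S x y <-> cR T x y.
Proof. intros S T _ H x y. apply cR_ext. auto. Qed.

Lemma cP_empty : cP (fun _ => False).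
Proof. exists Bot. intros z. split; [tauto|]. apply (mcs_bot _ (proj2_sig z)). Qed.

Lemma cP_full : cP (fun _ => True).
Proof.
  exists (Neg Bot). intros z. rewrite (mcs_negI _ _ (proj2_sig z)).
  split; auto. intros _. apply (mcs_bot _ (proj2_sig z)).
Qed.

Lemma cP_compl : forall S, cP S -> cP (fun x => ~ S x).
Proof.
  intros S [f Hf]. exists (Neg f). intros z. rewrite (mcs_negI _ _ (proj2_sig z)), Hf. tauto.
Qed.

Lemma cP_inter : forall S T, cP S -> cP T -> cP (fun x => S x /\ T x).
Proof.
  intros S T [f Hf] [g Hg]. exists (And f g). intros z. rewrite (mcs_and _ _ _ (proj2_sig z)), Hf, Hg. tauto.
Qed.

Lemma cP_union : forall S T, cP S -> cP T -> cP (fun x => S x \/ T x).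
Proof.
  intros S T [f Hf] [g Hg]. exists (Or f g). intros z. rewrite (mcs_or _ _ _ (proj2_sig z)), Hf, Hg. tauto.
Qed.

Lemma cP_box : forall S T, cP S -> cP T -> cP (fun x => forall y, cR S x y -> T y).
Proof.
  intros S T [f Hf] [g Hg]. exists (Box f g). intros z. rewrite <- box_lemma.
  split; intros H y Hr; apply Hg; apply H; revert Hr; apply cR_ext; intros w; rewrite Hf; tauto.
Qed.

Lemma cV_P : forall p, cP (cV p).
Proof. intros p. exists (Var p). intros z. unfold cV. tauto. Qed.

Definition canon (x0 : U0) : model :=
  Build_model U0 x0 cP cR cV cP_ext cR_ext2 cP_empty cP_full cP_compl cP_inter cP_union cP_box cV_P.

Lemma truth x0 : forall a (z : U0), sat (canon x0) z a <-> proj1_sig z a.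
Proof.
  induction a as [p| |a IH|a IHa b IHb|a IHa b IHb|a IHa b IHb|a IHa b IHb|a IHa b IHb]; intros z; cbn.
  - unfold cV. tauto.
  - split; [tauto|]. apply (mcs_bot _ (proj2_sig z)).
  - rewrite (mcs_negI _ _ (proj2_sig z)), IH. tauto.
  - rewrite (mcs_imp _ _ _ (proj2_sig z)), IHa, IHb. tauto.
  - rewrite (mcs_and _ _ _ (proj2_sig z)), IHa, IHb. tauto.
  - rewrite (mcs_or _ _ _ (proj2_sig z)), IHa, IHb. tauto.
  - rewrite <- box_lemma. split; intros H y Hr; apply IHb; apply H; revert Hr; apply cR_ext;
      intros w; rewrite IHa; tauto.
  - rewrite <- dia_lemma. split; intros [y [Hr Hy]]; exists y; split;
      try (apply IHb; auto); revert Hr; apply cR_ext; intros w; rewrite IHa; tauto.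
Qed.

Lemma tc_closable G f B : tc B -> closable G f B.
Proof.
  induction 1 as [B H|B alts H _ IH].
  - apply cl_closed; auto.
  - apply (cl_rule _ _ _ _ H). auto.
Qed.

Lemma assume_all G f L : forall B, (forall l, In l L -> G l \/ l = Neg f) ->
  (forall B', (forall q, In q (B ++ map (PF 1) L) -> In q B') -> closable G f B') -> closable G f B.
Proof.
  induction L as [|l L IH]; intros B HL H.
  - apply H. intros q. rewrite app_nil_r. auto.
  - apply (cl_assume _ _ _ (PF 1 l)).
    + destruct (HL l (or_introl eq_refl)) as [Hl| ->]; [left; exists l; auto | right; auto].
    + apply IH. intros; apply HL; simpl; auto.
      intros B' HB. apply H. intros q Hq. apply HB. simpl. rewrite in_app_iff in *. simpl in *. tauto.
Qed.

Theorem mainTheorem6 : forall (Gamma : form -> Prop) (phi : form),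
  entails Gamma phi -> derivable Gamma phi.
Proof.
  intros G f Hent. apply NNPP. intros Hnd.
  assert (HX : consis (fun a => G a \/ a = Neg f)).
  { intros [L [HL Hi]]. apply Hnd. unfold derivable.
    apply (cl_assume _ _ _ (PF 1 (Neg f))); [right; auto|].
    apply (assume_all _ _ L); auto. intros B' HB. apply tc_closable.
    apply (add_top 1). exists (Neg f). left. apply HB. left. auto.
    apply (tc_weak _ _ Hi). intros q Hq. simpl in Hq. destruct Hq as [<-|Hq]; [left; auto|right].
    apply HB. apply in_or_app. right. auto. }
  destruct (lindenbaum _ HX) as [x [Hx Hsub]].
  set (x0 := exist _ x Hx : U0).
  assert (Hs := Hent (canon x0) x0).
  rewrite (truth x0 f x0) in Hs.
  assert (Hn : x (Neg f)) by (apply Hsub; auto).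
  apply (mcs_negI _ _ Hx) in Hn. apply Hn. apply Hs.
  intros p Hp. rewrite (truth x0 p x0). simpl. apply Hsub. auto.
Qed.
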